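(* Let $\delta\ge0$, $\rho\in(0,1]$ and $\Pi\in\mathscr P_\delta(\Pi^* )$. Put $S_{\Pi,\rho}=(I+\rho^{-2}\Pi)^{1/2}$, $P^*_\rho=(I+\rho^{-2}\Pi^* )^{-1/2}$, $U=P^*_\rho S_{\Pi,\rho}^2P^*_\rho$, $U^*=I$ and $\alpha=2\delta^2\rho^{-2}+2\delta\rho^{-1}$. Then $\|U-U^*\|_2\le\alpha$.
   Context: $\Pi^*$ is the orthogonal projector onto an $m^*$-dimensional subspace of $\mathbb R^d$; $I$ is the $d\times d$ identity; $\|A\|_2$ is the Frobenius norm; $A\preceq B$ means $B-A$ is positive semidefinite; matrix square roots are positive semidefinite square roots. $\mathscr P_\delta(\Pi^* )=\{\Pi\in\mathbb R^{d\times d}\text{ symmetric}:\operatorname{tr}\Pi\le m^*,\ 0\preceq\Pi\preceq I,\ \operatorname{tr}((I-\Pi)\Pi^* )\le\delta^2\}$. Note $P^*_\rho=(I-\Pi^* )+\rho(1+\rho^2)^{-1/2}\Pi^*$. *)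

(* Defs.v *)
From HB Require Import structures.
From mathcomp Require Import all_boot all_order all_algebra.
Set Implicit Arguments. Unset Strict Implicit. Unset Printing Implicit Defensive.
Import Order.TTheory GRing.Theory Num.Theory.
Local Open Scope ring_scope.

Definition symmetric_mx (R : rcfType) (n : nat) (A : 'M[R]_n) : Prop := A^T = A.

Definition psd (R : rcfType) (n : nat) (A : 'M[R]_n) : Prop :=
  symmetric_mx A /\ forall x : 'cV[R]_n, 0 <= (x^T *m A *m x) 0 0.

Definition loewner_le (R : rcfType) (n : nat) (A B : 'M[R]_n) : Prop := psd (B - A).

Definition is_psd_sqrt (R : rcfType) (n : nat) (S A : 'M[R]_n) : Prop :=
  psd S /\ S *m S = A.

Definition frob (R : rcfType) (m n : nat) (A : 'M[R]_(m, n)) : R :=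
  Num.sqrt (\sum_(i < m) \sum_(j < n) A i j ^+ 2).

Definition orth_proj (R : rcfType) (n : nat) (P : 'M[R]_n) : Prop :=
  P^T = P /\ P *m P = P.

(* The set P_delta(Pistar), m = dimension of the range of Pistar. *)
Definition Pdelta (R : rcfType) (d m : nat) (delta : R) (Pstar Pi : 'M[R]_d) : Prop :=
  symmetric_mx Pi /\ \tr Pi <= m%:R /\ loewner_le 0 Pi /\ loewner_le Pi 1%:M /\
  \tr ((1%:M - Pi) *m Pstar) <= delta ^+ 2.

(* Main.v *)
Require Import Defs.
From HB Require Import structures.
From mathcomp Require Import all_boot all_order all_algebra.
From mathcomp Require Import ring lra.
Import Order.TTheory GRing.Theory Num.Theory.
Set Implicit Arguments. Unset Strict Implicit. Unset Printing Implicit Defensive.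
Local Open Scope ring_scope.

Section Helpers.
Variable R : rcfType.

Lemma sqrt_le (x y : R) : 0 <= y -> x <= y ^+ 2 -> Num.sqrt x <= y.
Proof. by move=> y0 h; rewrite -(ger0_norm y0) -sqrtr_sqr; apply: ler_wsqrtr. Qed.

Lemma disc (a b c : R) : 0 <= a -> 0 <= c ->
  (forall t, 0 <= a + 2 * b * t + c * t ^+ 2) -> b ^+ 2 <= a * c.
Proof.
move=> a0 c0 H.
have [c00|cn0] := eqVneq c 0.
  rewrite c00 mulr0; have [->|bn0] := eqVneq b 0; first by rewrite expr0n.
  have := H (- (a + 1) / (2 * b)).
  have -> : a + 2 * b * (- (a + 1) / (2 * b)) + c * (- (a + 1) / (2 * b)) ^+ 2 = -1.
    by rewrite c00; field.
  by rewrite ler0N1.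
have cp : 0 < c by rewrite lt_def cn0.
have := H (- b / c).
have -> : a + 2 * b * (- b / c) + c * (- b / c) ^+ 2 = (a * c - b ^+ 2) / c.
  by field.
by rewrite pmulr_lge0 ?invr_gt0 // subr_ge0.
Qed.

Lemma dlt n (A : 'M[R]_n) i j :
  ((delta_mx 0 i : 'rV[R]_n) *m A *m (delta_mx j 0 : 'cV[R]_n)) 0 0 = A i j.
Proof. by rewrite -rowE -colE !mxE. Qed.

Lemma trZMZ n k (M : 'M[R]_n) (Z : 'M[R]_(n,k)) :
  \tr (Z^T *m M *m Z) = \sum_j ((col j Z)^T *m M *m col j Z) 0 0.
Proof.
apply: eq_bigr => j _; rewrite colE trmx_mul trmx_delta.
by rewrite -dlt !mulmxA.
Qed.

Definition qpsd {n} (M : 'M[R]_n) := forall x : 'cV[R]_n, 0 <= (x^T *m M *m x) 0 0.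

Lemma psdT n k (M : 'M[R]_n) (Z : 'M[R]_(n,k)) : qpsd M -> 0 <= \tr (Z^T *m M *m Z).
Proof. by move=> h; rewrite trZMZ; apply: sumr_ge0 => j _; apply: h. Qed.

Lemma trAA n k (A : 'M[R]_(n,k)) : \tr (A^T *m A) = \sum_i \sum_j A i j ^+ 2.
Proof.
rewrite /mxtrace exchange_big; apply: eq_bigr => j _; rewrite !mxE.
by apply: eq_bigr => i _; rewrite !mxE expr2.
Qed.

Lemma frob_tr n k (A : 'M[R]_(n,k)) : frob A = Num.sqrt (\tr (A^T *m A)).
Proof. by rewrite trAA. Qed.

Lemma trAA_ge0 n k (A : 'M[R]_(n,k)) : 0 <= \tr (A^T *m A).
Proof. by rewrite trAA; apply: sumr_ge0 => i _; apply: sumr_ge0 => j _; apply: sqr_ge0. Qed.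

Lemma trAA_eq0 n k (A : 'M[R]_(n,k)) : \tr (A^T *m A) = 0 -> A = 0.
Proof.
rewrite trAA => /psumr_eq0P h; apply/matrixP => i j; rewrite mxE.
have h0 : forall i, true -> 0 <= \sum_j A i j ^+ 2.
  by move=> i' _; apply: sumr_ge0 => *; apply: sqr_ge0.
have := h h0 i isT; move/psumr_eq0P => h2.
have /eqP := h2 (fun j _ => sqr_ge0 (A i j)) j isT.
by rewrite sqrf_eq0 => /eqP.
Qed.

Lemma qpsdAA n (A : 'M[R]_n) : qpsd (A^T *m A).
Proof. by move=> x; rewrite -trace_mx11 mulmxA -mulmxA -trmx_mul trAA_ge0. Qed.

Lemma cs_form n k (M : 'M[R]_n) (X Y : 'M[R]_(n,k)) :
  M^T = M -> (forall Z : 'M[R]_(n,k), 0 <= \tr (Z^T *m M *m Z)) ->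
  (\tr (X^T *m M *m Y)) ^+ 2 <= \tr (X^T *m M *m X) * \tr (Y^T *m M *m Y).
Proof.
move=> sM H; apply: disc => // t.
have := H (X + t *: Y).
have -> : (X + t *: Y)^T = X^T + t *: Y^T by rewrite linearD /= linearZ.
rewrite !mulmxDl !mulmxDr -!scalemxAl -!scalemxAr !mxtraceD !mxtraceZ.
have -> : \tr (Y^T *m M *m X) = \tr (X^T *m M *m Y).
  by rewrite -mxtrace_tr !trmx_mul trmxK sM mulmxA.
suff -> : \tr (X^T *m M *m X) + t * \tr (X^T *m M *m Y) +
    (t * \tr (X^T *m M *m Y) + t * (t * \tr (Y^T *m M *m Y))) =
    \tr (X^T *m M *m X) + 2 * \tr (X^T *m M *m Y) * t + \tr (Y^T *m M *m Y) * t ^+ 2 by [].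
ring.
Qed.

Lemma frob_ge0 n k (A : 'M[R]_(n,k)) : 0 <= frob A.
Proof. exact: sqrtr_ge0. Qed.

Lemma cs_frob n k (X Y : 'M[R]_(n,k)) :
  \tr (X^T *m Y) <= frob X * frob Y.
Proof.
have := @cs_form n k 1%:M X Y (trmx1 _ _) (fun Z => ltac:(rewrite mulmx1; exact: trAA_ge0)).
rewrite !mulmx1 => h.
rewrite !frob_tr -sqrtrM ?trAA_ge0 //.
apply: le_trans (real_ler_norm _) _; first exact: num_real.
by rewrite -sqrtr_sqr ler_wsqrtr.
Qed.

Lemma frobD n k (X Y : 'M[R]_(n,k)) : frob (X + Y) <= frob X + frob Y.
Proof.
rewrite [frob (X + Y)]frob_tr; apply: sqrt_le; first by rewrite addr_ge0 ?frob_ge0.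
have -> : (X + Y)^T = X^T + Y^T by rewrite linearD.
rewrite !mulmxDl !mulmxDr !mxtraceD.
have -> : \tr (Y^T *m X) = \tr (X^T *m Y) by rewrite -mxtrace_tr trmx_mul trmxK.
have := cs_frob X Y.
rewrite sqrrD !frob_tr !sqr_sqrtr ?trAA_ge0 // -!frob_tr.
move=> h; rewrite mulr2n; lra.
Qed.

Lemma frobZ n k a (X : 'M[R]_(n,k)) : frob (a *: X) = `|a| * frob X.
Proof.
rewrite !frob_tr; have -> : (a *: X)^T = a *: X^T by rewrite linearZ.
rewrite -scalemxAl -scalemxAr !mxtraceZ mulrA -expr2.
by rewrite sqrtrM ?sqr_ge0 // sqrtr_sqr.
Qed.

Lemma frobN n k (X : 'M[R]_(n,k)) : frob (- X) = frob X.
Proof. by rewrite -scaleN1r frobZ normrN normr1 mul1r. Qed.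

Lemma frobB n k (X Y : 'M[R]_(n,k)) : frob (X - Y) <= frob X + frob Y.
Proof. by rewrite -(frobN Y) frobD. Qed.

Lemma frob_tr_mx n k (X : 'M[R]_(n,k)) : frob X^T = frob X.
Proof. by rewrite !frob_tr trmxK mxtrace_mulC. Qed.

Lemma frob_psd n (A : 'M[R]_n) : A^T = A -> qpsd A -> frob A <= \tr A.
Proof.
move=> sA pA.
have hd : forall i, 0 <= A i i by move=> i; have := pA (delta_mx i 0); rewrite trmx_delta dlt.
have ht : 0 <= \tr A by apply: sumr_ge0.
apply: sqrt_le => //.
have cs : forall i j, A i j ^+ 2 <= A i i * A j j.
  move=> i j.
  have := @cs_form n 1 A (delta_mx i 0) (delta_mx j 0) sA (fun Z => psdT Z pA).
  by rewrite !trace_mx11 !trmx_delta !dlt.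
rewrite expr2 /mxtrace mulr_suml; apply: ler_sum => i _.
rewrite mulr_sumr; apply: ler_sum => j _; exact: cs.
Qed.

Lemma sq_le n k (A : 'M[R]_n) (Y : 'M[R]_(n,k)) :
  A^T = A -> qpsd A -> qpsd (1%:M - A) ->
  \tr (Y^T *m A *m A *m Y) <= \tr (Y^T *m A *m Y).
Proof.
move=> sA pA pB.
set X := A *m Y.
have eX : X^T = Y^T *m A by rewrite /X trmx_mul sA.
have es : \tr (Y^T *m A *m A *m Y) = \tr (X^T *m X) by rewrite eX /X !mulmxA.
have cs := cs_form X Y sA (fun Z => psdT Z pA).
have e1 : \tr (X^T *m A *m Y) = \tr (X^T *m X) by rewrite /X !mulmxA.
have e2 : \tr (X^T *m A *m X) <= \tr (X^T *m X).
  by have := psdT X pB; rewrite mulmxBr mulmxBl mulmx1 raddfB /= subr_ge0.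
have t0 : 0 <= \tr (Y^T *m A *m Y) by apply: psdT.
have a0 : 0 <= \tr (X^T *m A *m X) by apply: psdT.
rewrite es; set s := \tr (X^T *m X); set t := \tr (Y^T *m A *m Y).
have s0 : 0 <= s by apply: trAA_ge0.
rewrite e1 -/s -/t in cs.
have cs2 : s ^+ 2 <= s * t.
  apply: le_trans cs _; rewrite [s * t]mulrC mulrC -subr_ge0 -mulrBl mulr_ge0 // subr_ge0; exact: e2.
have [s00|sn0] := eqVneq s 0; first by rewrite s00; exact: t0.
have sp : 0 < s by rewrite lt_def sn0.
by rewrite expr2 ler_pM2l in cs2.
Qed.

Lemma tr_pid n r : (r <= n)%N -> \tr (pid_mx r : 'M[R]_n) = r%:R.
Proof.
move=> rn.
have -> : (pid_mx r : 'M[R]_n) = (pid_mx r : 'M[R]_(n, r)) *m (pid_mx r : 'M[R]_(r, n)).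
  by rewrite mul_pid_mx !minnn.
rewrite mxtrace_mulC mul_pid_mx minnn (minn_idPr rn) pid_mx_1 mxtrace1 //.
Qed.

Lemma tr_idem n (A : 'M[R]_n) : A *m A = A -> \tr A = (\rank A)%:R.
Proof.
move=> AA.
have E := mulmx_ebase A.
set L := col_ebase A in E; set U := row_ebase A in E; set r := \rank A in E *.
set Pd := (pid_mx r : 'M[R]_n) in E.
have uL : L \in unitmx by apply: col_ebase_unit.
have uU : U \in unitmx by apply: row_ebase_unit.
have key : Pd *m (U *m L) *m Pd = Pd.
  have h : L *m (Pd *m (U *m L) *m Pd) *m U = L *m Pd *m U.
    by rewrite E -AA -E !mulmxA.
  have h2 := congr1 (fun M => invmx L *m M *m invmx U) h.
  by rewrite /= !mulmxA (mulVmx uL) !mul1mx !(mulmxK uU) in h2; rewrite !mulmxA.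
have PP : Pd *m Pd = Pd by rewrite pid_mx_id // rank_leq_row.
rewrite -E -mulmxA mxtrace_mulC -mulmxA -{1}PP -mulmxA mxtrace_mulC key.
by rewrite /Pd tr_pid // rank_leq_row.
Qed.

Lemma scal (rho : R) : 0 < rho -> rho <= 1 ->
  [/\ 0 < rho^-2, 0 < (Num.sqrt (1 + rho^-2))^-1, (Num.sqrt (1 + rho^-2))^-1 <= 1,
      ((Num.sqrt (1 + rho^-2))^-1) ^+ 2 * (1 + rho^-2) = 1 &
      rho^-2 * (Num.sqrt (1 + rho^-2))^-1 <= rho^-1].
Proof.
move=> r0 r1.
have ri0 : 0 < rho^-1 by rewrite invr_gt0.
have er : rho^-2 = rho^-1 ^+ 2 by rewrite exprVn.
have rp : 0 < rho^-2 by rewrite er exprn_gt0.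
set s := Num.sqrt (1 + rho^-2).
have sp : 0 < s by rewrite sqrtr_gt0 addr_gt0.
have sge : rho^-1 <= s.
  rewrite -(ger0_norm (ltW ri0)) -sqrtr_sqr /s -er; apply: ler_wsqrtr.
  by rewrite lerDr.
have cle : s^-1 <= rho.
  by rewrite -[X in _ <= X]invrK lef_pV2 ?posrE ?invr_gt0.
split => //.
- by rewrite invr_gt0.
- exact: le_trans cle r1.
- by rewrite exprVn /s sqr_sqrtr ?mulVf // ?addr_ge0 ?ltW // gt_eqF // addr_gt0.
- rewrite er expr2 -mulrA; apply: le_trans (ler_wpM2l (ltW ri0) (ler_wpM2l (ltW ri0) cle)) _.
  by rewrite mulVf ?mulr1 // gt_eqF.
Qed.

Lemma mulPs n (Ps : 'M[R]_n) a b a' b' : Ps *m Ps = Ps ->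
  (a *: 1%:M + b *: Ps) *m (a' *: 1%:M + b' *: Ps) =
  (a * a') *: 1%:M + (a * b' + b * a' + b * b') *: Ps.
Proof.
move=> PP; rewrite mulmxDl !mulmxDr -!scalemxAl -!scalemxAr !mul1mx !mulmx1 PP !scalerA.
by rewrite !scalerDl !addrA (mulrC b a').
Qed.
End Helpers.

Unset Implicit Arguments.

Theorem lemma4 (R : rcfType) (d m : nat) (Pstar Pi S P : 'M[R]_d) (delta rho : R) :
  orth_proj Pstar -> \rank Pstar = m ->
  0 <= delta -> 0 < rho -> rho <= 1 ->
  Pdelta m delta Pstar Pi ->
  is_psd_sqrt S (1%:M + rho^-2 *: Pi) ->
  is_psd_sqrt P (invmx (1%:M + rho^-2 *: Pstar)) ->
  frob (P *m (S *m S) *m P - 1%:M) <= 2 * delta ^+ 2 * rho^-2 + 2 * delta * rho^-1.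
Proof.
move=> [sPs PsPs] rk d0 rho0 rho1 [sPi [trPi [[_ pPi] [[sB pB] trB]]]] [_ SS] [[sP pP] PP].
rewrite subr0 in pPi.
have [rp cp c1 hc rc] := scal rho0 rho1.
rewrite SS; move: PP rc hc c1 cp rp.
set r := rho^-2; set c := (Num.sqrt (1 + r))^-1 => PP rc hc c1 cp rp.
have [Q eQ] : exists Q, Q = 1%:M - Pstar by eexists.
have QPs : Q *m Pstar = 0 by rewrite eQ mulmxBl mul1mx PsPs subrr.
have PsQ : Pstar *m Q = 0 by rewrite eQ mulmxBr mulmx1 PsPs subrr.
have QQ : Q *m Q = Q by rewrite {1}eQ mulmxBl mul1mx PsQ subr0.
have sQ : Q^T = Q by rewrite eQ linearB /= trmx1 sPs.
have EQ : Q = 1 *: 1%:M + (-1) *: Pstar by rewrite eQ scale1r scaleN1r.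
set N := 1%:M - (r * c ^+ 2) *: Pstar.
have EN : N = 1 *: 1%:M + (- (r * c ^+ 2)) *: Pstar by rewrite scale1r scaleNr.
have MN : (1%:M + r *: Pstar) *m N = 1%:M.
  rewrite EN -{1}[1%:M]scale1r mulPs // mulr1.
  have -> : 1 * - (r * c ^+ 2) + r * 1 + r * - (r * c ^+ 2) = r * (1 - c ^+ 2 * (1 + r)) by ring.
  by rewrite hc subrr mulr0 scale0r addr0 scale1r.
have iM : invmx (1%:M + r *: Pstar) = N.
  have [uM _] := mulmx1_unit MN.
  by have := mulmxA (invmx (1%:M + r *: Pstar)) (1%:M + r *: Pstar) N; rewrite MN mulmx1 (mulVmx uM) mul1mx.
rewrite iM in PP.
have k0 : r * c ^+ 2 != 0 by rewrite mulf_neq0 // ?gt_eqF // exprn_gt0.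
have PPs : P *m Pstar = Pstar *m P.
  have h : P *m (P *m P) = (P *m P) *m P by rewrite mulmxA.
  rewrite PP /N mulmxBr mulmxBl mulmx1 mul1mx -scalemxAr -scalemxAl in h.
  apply: (scalerI k0); apply: oppr_inj; apply: (addrI P); exact: h.
have [T eT] : exists T, T = Q + c *: Pstar by eexists.
have ET : T = 1 *: 1%:M + (c - 1) *: Pstar by rewrite eT eQ scale1r scalerBl scale1r addrAC addrA.
have TT : T *m T = N.
  rewrite ET mulPs // mulr1 EN; congr (_ + _ *: _).
  apply/eqP; rewrite -subr_eq0; apply/eqP.
  by transitivity (c ^+ 2 * (1 + r) - 1); [ring | rewrite hc subrr].
have PT : P *m T = T *m P.
  by rewrite eT eQ mulmxDr mulmxDl mulmxBr mulmxBl mulmx1 mul1mx -scalemxAr -scalemxAl PPs.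
have PeT : P = T.
  have [Y eY] : exists Y, Y = P - T by eexists.
  have h0 : (P + T) *m Y = 0.
    by rewrite eY mulmxBr (mulmxDl P T P) (mulmxDl P T T) PP TT PT [N + _]addrC subrr.
  have ht : \tr (Y^T *m (P + T) *m Y) = 0 by rewrite -mulmxA h0 mulmx0 mxtrace0.
  have e1 : \tr (Y^T *m (P + T) *m Y) = \tr (Y^T *m P *m Y) + \tr (Y^T *m Q *m Y) + c * \tr (Y^T *m Pstar *m Y).
    by rewrite eT !mulmxDr !mulmxDl -!scalemxAr -!scalemxAl !mxtraceD mxtraceZ addrA.
  have qQ : qpsd Q by rewrite -QQ -{1}sQ; apply: qpsdAA.
  have qPs : qpsd Pstar by rewrite -PsPs -{1}sPs; apply: qpsdAA.
  have t1 := psdT Y pP; have t2 := psdT Y qQ; have t3 := psdT Y qPs.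
  have t3' : 0 <= c * \tr (Y^T *m Pstar *m Y) by rewrite mulr_ge0 // ltW.
  have z2 : \tr (Y^T *m Q *m Y) = 0 by lra.
  have z3 : c * \tr (Y^T *m Pstar *m Y) = 0 by lra.
  move/eqP: z3; rewrite mulf_eq0 gt_eqF //= => /eqP z3.
  have : \tr (Y^T *m Y) = 0.
    have -> : Y^T *m Y = Y^T *m Q *m Y + Y^T *m Pstar *m Y by rewrite -mulmxDl -mulmxDr eQ subrK mulmx1.
    by rewrite mxtraceD z2 z3 addr0.
  by move/trAA_eq0/eqP; rewrite eY subr_eq0 => /eqP.
have [B eB] : exists B, B = 1%:M - Pi by eexists.
have ePi : Pi = 1%:M - B by rewrite eB opprB addrC subrK.
rewrite -eB in sB pB trB.
have sQ' := sQ.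
have eXt : (Q *m B *m Pstar)^T = Pstar *m B *m Q by rewrite !trmx_mul sQ sB sPs mulmxA.
have iden : P *m (1%:M + r *: Pi) *m P - 1%:M =
    r *: (Q *m Pi *m Q - (c *: (Q *m B *m Pstar) + c *: (Q *m B *m Pstar)^T + c ^+ 2 *: (Pstar *m B *m Pstar))).
  rewrite eXt PeT mulmxDr mulmx1 mulmxDl TT -scalemxAr -scalemxAl.
  rewrite {1}ePi mulmxBr mulmxBl mulmx1 TT.
  rewrite {1}ePi mulmxBr mulmxBl mulmx1 QQ.
  rewrite eT !mulmxDl !mulmxDr -!scalemxAl -!scalemxAr !scalerA ?mulmxA.
  move: (Q *m B *m Q) (Q *m B *m Pstar) (Pstar *m B *m Q) (Pstar *m B *m Pstar) => A1 A2 A3 A4.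
  rewrite /N eQ; apply/matrixP => i j; rewrite !mxE.
  apply/eqP; rewrite -subr_eq0; apply/eqP.
  by transitivity (r * Pstar i j * (1 - c ^+ 2 * (1 + r))); [ring | rewrite hc subrr mulr0].
rewrite iden frobZ (ger0_norm (ltW rp)).
have qPs : qpsd Pstar by rewrite -PsPs -{1}sPs; apply: qpsdAA.
have trPs : \tr Pstar = m%:R by rewrite tr_idem // rk.
have eBP : \tr (B *m Pstar) = \tr Pstar - \tr (Pi *m Pstar) by rewrite eB mulmxBl mul1mx raddfB.
have h1 : frob (Q *m Pi *m Q) <= delta ^+ 2.
  apply: le_trans (frob_psd _ _) _.
  - by rewrite !trmx_mul sQ sPi mulmxA.
  - by move=> x; have := pPi (Q *m x); rewrite trmx_mul sQ !mulmxA.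
  have -> : \tr (Q *m Pi *m Q) = \tr Pi - \tr (Pi *m Pstar).
    rewrite mxtrace_mulC mulmxA QQ {1}eQ mulmxBl mul1mx raddfB /=.
    by rewrite [\tr (Pstar *m Pi)]mxtrace_mulC.
  lra.
have h3 : frob (Pstar *m B *m Pstar) <= delta ^+ 2.
  apply: le_trans (frob_psd _ _) _.
  - by rewrite !trmx_mul sB sPs mulmxA.
  - by move=> x; have := pB (Pstar *m x); rewrite trmx_mul sPs !mulmxA.
  by rewrite mxtrace_mulC mulmxA PsPs mxtrace_mulC.
have h2 : frob (Q *m B *m Pstar) <= delta.
  rewrite frob_tr; apply: sqrt_le => //.
  have eY : (Q *m B *m Pstar)^T *m (Q *m B *m Pstar) =
      (B *m Pstar)^T *m (B *m Pstar) - (B *m Pstar)^T *m Pstar *m (B *m Pstar).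
    rewrite -(mulmxA Q) trmx_mul sQ mulmxA -(mulmxA _ Q Q) QQ eQ mulmxBr mulmx1 mulmxBl.
    by rewrite !mulmxA.
  rewrite eY raddfB /=.
  have t3 := psdT (B *m Pstar) qPs.
  have qPi : qpsd (1%:M - B) by rewrite -ePi.
  have := sq_le Pstar sB pB qPi.
  have -> : (B *m Pstar)^T = Pstar^T *m B by rewrite trmx_mul sB.
  rewrite (_ : (B *m Pstar)^T = Pstar^T *m B) ?trmx_mul ?sB // in t3.
  rewrite !mulmxA in t3 *.
  have -> : \tr (Pstar^T *m B *m Pstar) = \tr (B *m Pstar).
    by rewrite sPs mxtrace_mulC mulmxA PsPs mxtrace_mulC.
  lra.
have c2 : c ^+ 2 <= 1 by rewrite exprn_ile1 // ltW.
have hb : frob (Q *m Pi *m Q - (c *: (Q *m B *m Pstar) + c *: (Q *m B *m Pstar)^T +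
      c ^+ 2 *: (Pstar *m B *m Pstar))) <= delta ^+ 2 + (c * delta + c * delta + delta ^+ 2).
  apply: le_trans (frobB _ _) _; apply: lerD => //.
  apply: le_trans (frobD _ _) _; apply: lerD.
    apply: le_trans (frobD _ _) _; apply: lerD.
      by rewrite frobZ (ger0_norm (ltW cp)) ler_pM2l.
    by rewrite frobZ frob_tr_mx (ger0_norm (ltW cp)) ler_pM2l.
  rewrite frobZ ger0_norm ?exprn_ge0 ?(ltW cp) //.
  by rewrite -[X in _ <= X]mul1r; apply: ler_pM => //; rewrite ?exprn_ge0 ?frob_ge0 ?ltW.
apply: le_trans (ler_wpM2l (ltW rp) hb) _.
have h := ler_wpM2r d0 rc.
lra.
Qed.
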